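(* Let $X$ be a topological space and consider the topological group $C_p(X)$. Then the following properties of $C_p(X)$ are all equivalent: $\alpha_{2^-}$, $\alpha_2$, $\alpha_{3^-}$, $\alpha_3$, $\alpha_4$, locally Ramsey, and Ramsey.
   Context: $C_p(X)$ is the group of continuous real-valued functions on $X$ with the topology of pointwise convergence. Convention: a ''sequence'' is a countably infinite set; a countably infinite set $A$ converges to $x$ if $x\notin A$ and every neighborhood of $x$ contains all but finitely many elements of $A$. $\lim_m x_{nm}=x$ means $x_{nm}\neq x$ for all $m$ and every neighborhood of $x$ contains $x_{nm}$ for all but finitely many $m$. A space $Y$ is $\alpha_i$ ($i=2,3,4$) if for each $y\in Y$ and all pairwise disjoint sequences $S_1,S_2,\dots\subseteq Y$ each converging to $y$, there is a sequence $S\subseteq\bigcup_nS_n$ converging to $y$ such that, respectively: ($\alpha_2$) $S_n\cap S$ is infinite for all $n$; ($\alpha_3$) $S_n\cap S$ is infinite for infinitely many $n$; ($\alpha_4$) $S_n\cap S$ is nonempty for infinitely many $n$. $Y$ is $\alpha_{2^-}$ if for each $y$, whenever $\lim_m x_{nm}=y$ for all $n$, there are $m_1<m_2<\dots$ with $\bigcup_n\{x_{1m_n},\dots,x_{nm_n}\}$ converging to $y$. $Y$ is $\alpha_{3^-}$ if for each $y$, whenever $\lim_m x_{nm}=y$ for all $n$, there are infinite $I,J\subseteq\mathbb N$ with $\{x_{nm}:n\in I, m\in J, n<m\}$ converging to $y$. $Y$ is locally Ramsey if for each $y$, whenever $\lim_m x_{nm}=y$ for all $n$, there is an infinite $I\subseteq\mathbb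 N$ with $\{x_{nm}: n,m\in I, n<m\}$ converging to $y$. $Y$ is Ramsey if whenever $\lim_m x_{nm}=x_n$ for each $n$ and $\lim_n x_n=y$, there is an infinite $I\subseteq\mathbb N$ such that for each neighborhood $U$ of $y$ there is $k$ with $\{x_{nm}: k<n<m,\ n,m\in I\}\subseteq U$. *)

(* Defs.v *)
From HB Require Import structures.
From mathcomp Require Import all_boot all_order all_algebra.
From mathcomp Require Import all_classical all_reals all_analysis.

Set Implicit Arguments.
Unset Strict Implicit.
Unset Printing Implicit Defensive.

Import numFieldNormedType.Exports.
Local Open Scope classical_set_scope.

(** C_p(X): continuous real-valued functions on X, as a subspace (initial
    topology of the inclusion) of the product space {ptws X -> R}. *)
Definition Cp (X : topologicalType) (R : realType) : topologicalType :=
  set_type ([set f : X -> R | continuous f] : set {ptws X -> R}).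

Section Props.
Context {Y : topologicalType}.

Definition is_sequence (A : set Y) : Prop := countable A /\ ~ finite_set A.

Definition set_converges (A : set Y) (y : Y) : Prop :=
  is_sequence A /\ ~ A y /\
  forall U, nbhs y U -> finite_set (A `\` U).

Definition lim_seq (x : nat -> Y) (y : Y) : Prop :=
  (forall m, x m <> y) /\
  forall U, nbhs y U -> exists k, forall m, (k <= m)%N -> U (x m).

Definition pairwise_disjoint (S : nat -> set Y) : Prop :=
  forall n m, n <> m -> S n `&` S m = set0.

Definition alpha_hyp (y : Y) (S : nat -> set Y) : Prop :=
  pairwise_disjoint S /\ forall n, set_converges (S n) y.

Definition alpha2 : Prop :=
  forall (y : Y) (S : nat -> set Y), alpha_hyp y S ->
  exists T : set Y, T `<=` \bigcup_n S n /\ set_converges T y /\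
    forall n, ~ finite_set (S n `&` T).

Definition alpha3 : Prop :=
  forall (y : Y) (S : nat -> set Y), alpha_hyp y S ->
  exists T : set Y, T `<=` \bigcup_n S n /\ set_converges T y /\
    ~ finite_set [set n | ~ finite_set (S n `&` T)].

Definition alpha4 : Prop :=
  forall (y : Y) (S : nat -> set Y), alpha_hyp y S ->
  exists T : set Y, T `<=` \bigcup_n S n /\ set_converges T y /\
    ~ finite_set [set n | S n `&` T !=set0].

(** (indices start at 0 instead of 1) *)
Definition alpha2m : Prop :=
  forall (y : Y) (x : nat -> nat -> Y), (forall n, lim_seq (x n) y) ->
  exists mu : nat -> nat, (forall n, (mu n < mu n.+1)%N) /\
    set_converges [set z | exists n i, (i <= n)%N /\ z = x i (mu n)] y.

Definition alpha3m : Prop :=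
  forall (y : Y) (x : nat -> nat -> Y), (forall n, lim_seq (x n) y) ->
  exists I J : set nat, ~ finite_set I /\ ~ finite_set J /\
    set_converges [set z | exists n m, [/\ I n, J m, (n < m)%N & z = x n m]] y.

Definition locally_Ramsey : Prop :=
  forall (y : Y) (x : nat -> nat -> Y), (forall n, lim_seq (x n) y) ->
  exists I : set nat, ~ finite_set I /\
    set_converges [set z | exists n m, [/\ I n, I m, (n < m)%N & z = x n m]] y.

Definition Ramsey : Prop :=
  forall (y : Y) (xn : nat -> Y) (x : nat -> nat -> Y),
  (forall n, lim_seq (x n) (xn n)) -> lim_seq xn y ->
  exists I : set nat, ~ finite_set I /\
    forall U, nbhs y U -> exists k,
      [set z | exists n m, [/\ I n, I m, (k < n < m)%N & z = x n m]] `<=` U.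

End Props.
Arguments alpha2 : clear implicits.
Arguments alpha3 : clear implicits.
Arguments alpha4 : clear implicits.
Arguments alpha2m : clear implicits.
Arguments alpha3m : clear implicits.
Arguments locally_Ramsey : clear implicits.
Arguments Ramsey : clear implicits.

(* Main.v *)
Require Import Defs.
From HB Require Import structures.
From mathcomp Require Import all_boot all_order all_algebra.
From mathcomp Require Import all_classical all_reals all_analysis.
From mathcomp Require Import lra.
Set Implicit Arguments. Unset Strict Implicit. Unset Printing Implicit Defensive.
Import Order.TTheory GRing.Theory Num.Theory.
Import numFieldNormedType.Exports.
Local Open Scope classical_set_scope.
Local Open Scope ring_scope.

Section Cp.
Variables (R : realType) (X : topologicalType).
Local Notation Y := (Cp X R).
Local Notation P := ({ptws X -> R}).
Definition ev (f : Y) (t : X) : R := (\val f : X -> R) t.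
Definition box (f : Y) (s : seq X) (e : R) : set Y :=
  [set g | forall t, t \in s -> `|ev g t - ev f t| < e].
Definition pbox (f : P) (s : seq X) (e : R) : set P :=
  [set g | forall t, t \in s -> `|g t - f t| < e].

Lemma sv_cont : continuous (set_val : Y -> P).
Proof. exact: initial_continuous. Qed.

Lemma nbhs_pbox (f : P) s e : 0 < e -> nbhs f (pbox f s e).
Proof.
move=> e0; have FF := @nbhs_filter P f; elim: s => [|t s IH].
  have H0 := @filterT _ _ FF.
  refine (@filterS _ _ FF setT _ _ H0). by move=> g _ t; rewrite in_nil.
have H1 : nbhs f ((@proj X (fun _ => R) t) @^-1` [set r | `|r - f t| < e]).
  apply: (@proj_continuous X (fun _ => R) t f).
  rewrite /proj; have B0 := nbhsx_ballx (f t : R) e e0.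
  refine (@filterS _ _ _ _ _ _ B0) => r.
  by rewrite /ball /= distrC.
refine (@filterS _ _ FF _ _ _ (@filterI _ _ FF _ _ H1 IH)).
move=> g [/= H2 H3] u; rewrite in_cons.
by case/orP => [/eqP -> //|/H3].
Qed.

Lemma nbhs_box (f : Y) s e : 0 < e -> nbhs f (box f s e).
Proof.
move=> e0; have H := @sv_cont f _ (nbhs_pbox (set_val f) s e0).
exact: H.
Qed.

Definition boxF (f : P) : set_system P :=
  [set V | exists s e, 0 < e /\ pbox f s e `<=` V].

Lemma boxF_filter f : Filter (boxF f).
Proof.
constructor.
- by exists [::], 1; split => // g _ t; rewrite in_nil.
- move=> A B [s [e [e0 sA]]] [s' [e' [e0' sB]]].
  exists (s ++ s'), (Num.min e e'); split; first by rewrite lt_min e0 e0'.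
  move=> g Hg; split.
    apply: sA => t ts; apply: lt_le_trans (Hg t _) _; first by rewrite mem_cat ts.
    by rewrite ge_min lexx.
  apply: sB => t ts; apply: lt_le_trans (Hg t _) _; first by rewrite mem_cat ts orbT.
  by rewrite ge_min lexx orbT.
- move=> A B AB [s [e [e0 sA]]]; exists s, e; split => //; exact: subset_trans AB.
Qed.

Lemma boxF_cvg (f : P) : boxF f --> f.
Proof.
have FF := boxF_filter f.
apply/pointwise_cvgP => t V /nbhs_ballP [e e0 sV].
exists [:: t], e; split => // g Hg; apply: sV.
rewrite /ball /= distrC; exact: Hg t (mem_head _ _).
Qed.

Lemma nbhsP (f : Y) (U : set Y) : nbhs f U ->
  exists s e, 0 < e /\ box f s e `<=` U.
Proof.
rewrite nbhsE => -[B [oB Bf] BU]; move: oB; case => A oA EA.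
have : nbhs (set_val f : P) A.
  rewrite nbhsE; exists A => //; split => //.
  by move: Bf; rewrite -EA.
move/boxF_cvg => [s [e [e0 sA]]]; exists s, e; split => // g Hg.
apply: BU; rewrite -EA; apply: sA => t ts; exact: Hg.
Qed.

Lemma evC (f : Y) : continuous (ev f).
Proof. by have := valP f; rewrite inE. Qed.

Definition mkY (g : X -> R) (H : continuous g) : Y := exist _ (g : P) (mem_set H).

Lemma ev_inj (f g : Y) : (forall t, ev f t = ev g t) -> f = g.
Proof. by move=> H; apply: val_inj; apply: funext. Qed.

Lemma neq_ev (f g : Y) : f <> g -> exists t, ev f t != ev g t.
Proof.
move=> fg; apply: contrapT => nE; apply: fg; apply: ev_inj => t.
by apply/eqP; apply: contrapT => /negP H; apply: nE; exists t.
Qed.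

Lemma nbhs_neq (f y : Y) : f <> y -> nbhs y (~` [set f]).
Proof.
move=> /neq_ev [t ft]; have e0 : 0 < `|ev f t - ev y t| by rewrite normr_gt0 subr_eq0.
apply: filterS (nbhs_box y [:: t] e0) => g Hg /= gf.
by move: (Hg t (mem_head _ _)); rewrite gf ltxx.
Qed.

Lemma nbhs_fin (F : set Y) (y : Y) : finite_set F -> ~ F y -> nbhs y (~` F).
Proof.
move=> /finite_seqP [s ->] Fy.
have : forall z, z \in s -> z <> y by move=> z zs zy; apply: Fy; rewrite -zy.
elim: s {Fy} => [|z s IH] H.
  by apply: filterS (@filterT _ _ _) => g _ /=; rewrite in_nil.
have H1 := nbhs_neq (H z (mem_head _ _)).
have H2 : nbhs y (~` [set` s]) by apply: IH => u us; apply: H; rewrite in_cons us orbT.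
apply: filterS (filterI H1 H2) => g [/= g1 g2]; rewrite in_cons.
by case/orP => [/eqP //|]; exact: g2.
Qed.

Lemma cvgYP {T : Type} (F : set_system T) {FF : Filter F} (u : T -> Y) (y : Y) :
  (forall U, nbhs y U -> F (u @^-1` U)) <->
  (forall t, (fun i => ev (u i) t) @ F --> ev y t).
Proof.
split.
  move=> H t; apply/cvgrPdist_lt => e e0.
  apply: filterS (H _ (nbhs_box y [:: t] e0)) => i /= Hi.
  by rewrite distrC; exact: Hi t (mem_head _ _).
move=> H U /nbhsP [s [e [e0 sU]]].
suff : F (u @^-1` box y s e) by apply: filterS => i /sU.
elim: s {sU} => [|t s IH].
  by apply: filterS (@filterT _ _ _) => i _ t; rewrite in_nil.
have H1 := (@cvgrPdist_lt _ _ _ _ FF _ _).1 (H t) e e0.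
apply: filterS (filterI H1 IH) => i [/= i1 i2] v; rewrite in_cons.
by case/orP => [/eqP ->|/i2 //]; rewrite distrC.
Qed.

Lemma ooP (Q : set nat) : \oo Q <-> exists k, forall m, (k <= m)%N -> Q m.
Proof.
split; first by case=> k _ Hk; exists k => m km; exact: Hk.
by case=> k Hk; exists k => // m; exact: Hk.
Qed.

Lemma limYP (u : nat -> Y) (y : Y) : lim_seq u y <->
  (forall m, u m <> y) /\ forall t, (fun m => ev (u m) t) @ \oo --> ev y t.
Proof.
rewrite /lim_seq; split => -[H1 H2]; split => //.
  by apply/cvgYP => U /H2 /ooP.
by move=> U UN; apply/ooP; exact: ((@cvgYP _ \oo _ u y).2 H2 U UN).
Qed.

Definition cofin (A : set Y) : set_system Y := [set V | finite_set (A `\` V)].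

Lemma cofin_filter A : Filter (cofin A).
Proof.
constructor; rewrite /cofin /=.
- by rewrite setDT; exact: finite_set0.
- move=> U V fU fV; have : finite_set ((A `\` U) `|` (A `\` V)) by rewrite finite_setU.
  apply: sub_finite_set => z [Az nUV]; have [Uz|nUz] := pselect (U z).
    by right; split => // Vz; apply: nUV.
  by left.
- move=> U V UV; apply: sub_finite_set => z [Az nVz]; by split => // /UV.
Qed.

Lemma setcP (A : set Y) (y : Y) : set_converges A y <->
  [/\ countable A, infinite_set A, ~ A y &
    forall t, (fun g => ev g t) @ cofin A --> ev y t].
Proof.
have FF := cofin_filter A.
rewrite /set_converges /is_sequence; split.
  by case=> -[c i] [Ay H]; split => //; apply/(@cvgYP _ (cofin A) FF id y).
case=> c i Ay H; split => //; split => //.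
by move=> U /((@cvgYP _ (cofin A) FF id y).2 H).
Qed.

Lemma fin_bound (A : set nat) : finite_set A -> exists k, forall n, A n -> (n < k)%N.
Proof.
move=> /finite_seqP [s ->]; elim: s => [|a s [k Hk]].
  by exists 0%N => n /=; rewrite in_nil.
exists (maxn a.+1 k) => n /=; rewrite in_cons => /orP [/eqP ->|/Hk nk].
  by rewrite leq_max leqnn.
by rewrite leq_max nk orbT.
Qed.

Lemma bound_fin (A : set nat) k : (forall n, A n -> (n < k)%N) -> finite_set A.
Proof. by move=> H; apply: (sub_finite_set _ (finite_II k)) => n /H. Qed.

Lemma inf_unbounded (A : set nat) : infinite_set A -> forall b, exists n, (b < n)%N /\ A n.
Proof.
move=> iA b; apply: contrapT => H; apply: iA; apply: (@bound_fin _ b.+1) => n An.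
by rewrite ltnS leqNgt; apply/negP => bn; apply: H; exists n.
Qed.

Lemma countable_sub (A : set Y) (f : nat -> nat -> Y) :
  (forall z, A z -> exists n m, z = f n m) -> countable A.
Proof.
move=> H; have : A `<=` (fun p : nat * nat => f p.1 p.2) @` setT.
  by move=> z /H [n [m ->]]; exists (n, m).
move/subset_card_le => H1; apply: card_le_trans H1 _.
apply: card_le_trans (card_image_le _ _) _; exact: countableP.
Qed.

Lemma lim_img_inf (u : nat -> Y) (y : Y) (J : set nat) :
  lim_seq u y -> infinite_set J -> infinite_set (u @` J).
Proof.
move=> [uy H] iJ fJ; apply: iJ.
have : nbhs y (~` (u @` J)) by apply: nbhs_fin => // -[m _ /uy].
move/H => [k Hk]; apply: (@bound_fin _ k) => n Jn.
rewrite ltnNge; apply/negP => /Hk; apply; by exists n.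
Qed.

Lemma lim_set_conv (u : nat -> Y) (y : Y) (J : set nat) :
  lim_seq u y -> infinite_set J -> set_converges (u @` J) y.
Proof.
move=> uy iJ; split; [split|split].
- apply: card_le_trans (card_image_le _ _) _; exact: countableP.
- exact: (lim_img_inf uy iJ).
- by case=> m _; apply: uy.1.
- move=> U /uy.2 [k Hk]; apply: (sub_finite_set _ (finite_image u (finite_II k))).
  move=> z [[m Jm <-] nU]; exists m => //=; rewrite ltnNge; apply/negP => /Hk.
  exact: nU.
Qed.

Lemma conv_sub (A B : set Y) (y : Y) :
  set_converges A y -> B `<=` A -> infinite_set B -> set_converges B y.
Proof.
move=> [[cA iA] [Ay H]] BA iB; split; [split|split] => //.
- exact: card_le_trans (subset_card_le BA) cA.
- by move/BA.
- move=> U /H; apply: sub_finite_set => z [/BA ? ?]; by split.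
Qed.

Lemma enum_conv (S : set Y) (y : Y) : set_converges S y ->
  exists u : nat -> Y, injective u /\ (forall m, S (u m)) /\ lim_seq u y.
Proof.
move=> [[cS iS] [Sy H]].
move: iS => /infiniteP /card_leP [f].
pose u m : Y := \val (f (exist _ m (mem_set I))).
have uS m : S (u m) by rewrite /u; case: (f _) => z /=; rewrite inE.
have uinj : injective u.
  move=> m m' /val_inj /(@inj _ _ _ f) => E.
  have : exist (fun m => m \in [set: nat]) m (mem_set I) = exist _ m' (mem_set I).
    by apply: E; rewrite inE.
  by case.
exists u; split => //; split => //; split; first by move=> m um; apply: Sy; rewrite -um.
move=> U /H fSU.
have : finite_set (u @^-1` (S `\` U)).
  by apply: finite_preimage => // m m' _ _; exact: uinj.
move/fin_bound => [k Hk]; exists k => m km; apply: contrapT => nU.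
by move: (Hk m (conj (uS m) nU)); rewrite ltnNge km.
Qed.

Lemma alpha4' : alpha4 Y -> forall (y : Y) (S : nat -> set Y),
  (forall n, set_converges (S n) y) ->
  exists T : set Y, T `<=` \bigcup_n S n /\ set_converges T y /\
    infinite_set [set n | S n `&` T !=set0].
Proof.
move=> a4 y S Sc.
pose S' n := S n `\` \bigcup_(j in [set j | (j < n)%N]) S j.
have [iK|fK] := pselect (infinite_set [set n | infinite_set (S' n)]).
  have [g Hg] := choice (inf_unbounded iK).
  pose nu := fix nu k := if k is k'.+1 then g (nu k') else g 0%N.
  have nuS k : (nu k < nu k.+1)%N by exact: (Hg _).1.
  have numono k l : (k < l)%N -> (nu k < nu l)%N.
    elim: l => // l IH; rewrite ltnS leq_eqVlt => /orP [/eqP ->|/IH h]; first exact: nuS.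
    exact: ltn_trans h (nuS l).
  have nuge k : (k <= nu k)%N.
    elim: k => // k IH; exact: leq_ltn_trans IH (nuS k).
  have nuinf k : infinite_set (S' (nu k)) by case: k => [|k]; exact: (Hg _).2.
  have disj k l : (k < l)%N -> forall z, S' (nu k) z -> S' (nu l) z -> False.
    move=> kl z [Sk _] [_ Hl]; apply: Hl; exists (nu k) => //; exact: numono.
  have [|T [TS [Tc iT]]] := a4 y (fun k => S' (nu k)).
    split.
      move=> k l kl; apply/seteqP; split => // z [/= zk zl].
      have [kl'|lk] := ltnP k l; first exact: disj kl' z zk zl.
      rewrite leq_eqVlt in lk; case/orP: lk => [/eqP lk|lk]; first by apply: kl.
      exact: disj lk z zl zk.
    move=> k; apply: conv_sub (Sc (nu k)) _ (nuinf k) => z [] //.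
  exists T; split; first by move=> z /TS [k _ [Sz _]]; exists (nu k).
  split => // fin; apply: iT; move/fin_bound: fin => [b Hb].
  apply: (@bound_fin _ b) => k [z [[Sz _] Tz]].
  apply: leq_ltn_trans (nuge k) _; apply: Hb; by exists z.
have [N0 HN0] := fin_bound (contrapT fK).
pose A := \bigcup_(j in [set j | (j < N0.+1)%N]) S j.
have finD n : finite_set (S n `\` A).
  elim/ltn_ind: n => n IH; case: (leqP n N0) => [nN|Nn].
    apply: (sub_finite_set _ (@finite_set0 Y)) => z [Sz nA]; apply: nA.
    by exists n.
  have fS' : finite_set (S' n).
    apply: contrapT => iS; move: (HN0 n iS); rewrite ltnNge => /negP; apply.
    exact: ltnW.
  have : finite_set (S' n `|` \bigcup_(j in [set j | (j < n)%N]) (S j `\` A)).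
    rewrite finite_setU; split => //; apply: bigcup_finite; first exact: finite_II.
    by move=> j jn; exact: IH.
  apply: sub_finite_set => z [Sz nA].
  have [[j jn Sjz]|nU] := pselect ((\bigcup_(j in [set j | (j < n)%N]) S j) z).
    by right; exists j.
  by left; split.
exists A; split; first by move=> z [j _ Sjz]; exists j.
split.
  split; [split|split].
  - apply: bigcup_countable; first exact: countableP.
    by move=> j _; case: (Sc j) => -[].
  - apply: (@sub_infinite_set _ (S 0%N)); first by move=> z Sz; exists 0%N.
    by case: (Sc 0%N) => -[].
  - by case=> j _ Sjy; case: (Sc j) => _ [].
  - move=> U NU.
    have : finite_set (\bigcup_(j in [set j | (j < N0.+1)%N]) (S j `\` U)).
      apply: bigcup_finite; first exact: finite_II.
      by move=> j _; case: (Sc j) => _ [_]; apply.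
    by apply: sub_finite_set => z [[j jN Sjz] nU]; exists j.
apply: (@sub_infinite_set _ setT); last exact: infinite_nat.
move=> n _; apply: contrapT => nE; case: (Sc n) => -[_ iS] _; apply: iS.
apply: sub_finite_set (finD n) => z Sz; split => // Az; apply: nE; by exists z.
Qed.

Section Strong.
Variables (y : Y) (x : nat -> nat -> Y).
Hypothesis xl : forall n, lim_seq (x n) y.

Definition dd i m t := `|ev (x i m) t - ev y t|.
Fixpoint phi n m t := if n is n'.+1 then phi n' m t + dd n m t else dd 0 m t.

Lemma dd_cont i m : continuous (dd i m).
Proof.
move=> t; apply: (@continuous_comp _ _ _ (fun t => ev (x i m) t - ev y t) Num.norm).
  exact: cvgB (@evC (x i m) t) (@evC y t).
exact: norm_continuous.
Qed.

Lemma phi_cont n m : continuous (phi n m).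
Proof.
elim: n => [|n IH]; first exact: (@dd_cont 0 m).
move=> t; have := cvgD (IH t) (@dd_cont n.+1 m t); exact.
Qed.

Lemma phi_ge0 n m t : 0 <= phi n m t.
Proof. by elim: n => [|n IH] /=; [exact: normr_ge0|exact: addr_ge0 IH (normr_ge0 _)]. Qed.

Lemma phi_ge n m t i : (i <= n)%N -> dd i m t <= phi n m t.
Proof.
elim: n => [|n IH]; first by rewrite leqn0 => /eqP ->.
rewrite leq_eqVlt => /orP [/eqP ->|]; first by simpl; rewrite lerDr; exact: phi_ge0.
rewrite ltnS => /IH h /=; apply: le_trans h _; by rewrite lerDl; exact: normr_ge0.
Qed.

Lemma dd_cvg i t : (fun m => dd i m t) @ \oo --> 0.
Proof.
have := (limYP _ _).1 (xl i) => -[_ /(_ t) H].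
have H2 := @cvgB _ _ _ _ eventually_filter _ _ _ _ H (@cvg_cst _ (ev y t) _ \oo eventually_filter); rewrite subrr in H2.
have := cvg_norm H2; rewrite normr0; exact.
Qed.

Lemma phi_cvg n t : (fun m => phi n m t) @ \oo --> 0.
Proof.
elim: n => [|n IH]; first exact: dd_cvg.
have := cvgD IH (dd_cvg n.+1 t); rewrite addr0; exact.
Qed.

Definition q n : R := (n.+1%:R)^-1 / 2.
Definition cc n m : R := harmonic m * q n.

Lemma q_gt0 n : 0 < q n.
Proof. by rewrite /q divr_gt0 // invr_gt0 ltr0n. Qed.

Lemma cc_gt0 n m : 0 < cc n m.
Proof. by rewrite /cc mulr_gt0 ?q_gt0 // harmonic_gt0. Qed.

Lemma cc_le n m : cc n m <= q n.
Proof.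
rewrite /cc ler_piMl ?(ltW (q_gt0 n)) //= invf_le1 ?ltr0n //.
by rewrite ler1n.
Qed.

Lemma cc_cvg n : (fun m => cc n m) @ \oo --> 0.
Proof.
have := @cvgMl _ _ _ eventually_filter _ _ (q n) (@cvg_harmonic R); rewrite mul0r; exact.
Qed.

Lemma hcont n m : continuous (fun t => ev y t + (phi n m t + cc n m)).
Proof.
move=> t; have := cvgD (@evC y t) (cvgD (@phi_cont n m t) (@cvg_cst _ (cc n m) _ (nbhs t) _)).
exact.
Qed.

Definition h n m : Y := mkY (@hcont n m).

Lemma h_ev n m t : ev (h n m) t = ev y t + (phi n m t + cc n m).
Proof. by []. Qed.

Lemma h_neq n m : h n m <> y.
Proof.
have [t _] := neq_ev ((xl 0).1 0) => hy.
have := h_ev n m t; rewrite hy => E.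
have := @phi_ge0 n m t; have := cc_gt0 n m; lra.
Qed.

Lemma h_lim n : lim_seq (h n) y.
Proof.
apply/limYP; split; first exact: h_neq.
move=> t; have := @cvgD _ _ _ _ eventually_filter _ _ _ _ (phi_cvg n t) (cc_cvg n); rewrite addr0 => H.
have := @cvgD _ _ _ _ eventually_filter _ _ _ _ (@cvg_cst _ (ev y t) _ \oo eventually_filter) H; rewrite addr0; exact.
Qed.


Hypothesis a4 : alpha4 Y.

Lemma strong_mu : exists mu : nat -> nat, (forall k, (mu k < mu k.+1)%N) /\
  forall t e, 0 < e -> exists k0, forall k i, (k0 <= k)%N -> (i <= k)%N ->
    `|ev (x i (mu k)) t - ev y t| < e.
Proof.
have [t0 _] := neq_ev ((xl 0).1 0).
have Nex n : exists N, (n <= N)%N /\ forall m, (N <= m)%N -> phi n m t0 < q n.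
  have := (@cvgrPdist_lt _ _ _ _ eventually_filter _ _).1 (phi_cvg n t0) (q n) (q_gt0 n).
  move/ooP => [k Hk]; exists (maxn n k); split; first by rewrite leq_maxl.
  move=> m; rewrite geq_max => /andP [_ km]; have := Hk m km.
  by rewrite sub0r normrN ger0_norm //; exact: phi_ge0.
have [Nf HN] := choice Nex.
pose S n := h n @` [set m | (Nf n <= m)%N].
have Sc n : set_converges (S n) y.
  apply: lim_set_conv (h_lim n) _ => fin; move/fin_bound: fin => [b Hb].
  by move: (Hb (Nf n + b)%N (leq_addr _ _)); rewrite ltnNge leq_addl.
have [T [TS [Tc iK]]] := alpha4' a4 Sc.
pose K := [set n | S n `&` T !=set0].
have Mex n : exists m, K n -> (Nf n <= m)%N /\ T (h n m).
  have [[z [[m Nm <-] Tz]]|nK] := pselect (K n); last by exists 0%N.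
  by exists m.
have [Mf HM] := choice Mex.
have [g Hg] := choice (inf_unbounded iK).
pose nk := fix nk k := if k is k'.+1 then g (nk k' + Mf (nk k'))%N else g 0%N.
pose mu k := Mf (nk k).
have nkK k : K (nk k) by case: k => [|k]; exact: (Hg _).2.
have Mge n : K n -> (n <= Mf n)%N.
  by move=> Kn; apply: leq_trans (HN n).1 (HM n Kn).1.
have nkS k : (nk k + mu k < nk k.+1)%N by exact: (Hg _).1.
have nkge k : (k <= nk k)%N.
  elim: k => // k IH; apply: leq_ltn_trans IH _.
  exact: leq_ltn_trans (leq_addr (mu k) _) (nkS k).
have muS k : (mu k < mu k.+1)%N.
  apply: leq_trans (Mge _ (nkK k.+1)).
  exact: leq_ltn_trans (leq_addl (nk k) _) (nkS k).
have hb z : exists B, forall n m, (Nf n <= m)%N -> h n m = z -> (n < B)%N.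
  have [dpos|dneg] := ltP 0 (ev z t0 - ev y t0).
    exists (Num.Def.archi_bound ((ev z t0 - ev y t0)^-1)) => n m Nm hz.
    set d := ev z t0 - ev y t0 in dpos *.
    have dE : d = phi n m t0 + cc n m by rewrite /d -hz h_ev addrC addKr.
    have h1 := (HN n).2 m Nm; have h2 := cc_le n m.
    have h3 : d < (n.+1%:R)^-1.
      rewrite [X in _ < X]splitr -/(q n); rewrite dE; lra.
    have h4 : (n.+1%:R : R) < d^-1.
      rewrite -[X in X < _]invrK ltf_pV2 ?posrE ?invr_gt0 ?ltr0n //.
    have dinv : 0 < d^-1 by rewrite invr_gt0.
    have h5 := archi_boundP (ltW dinv).
    have : (n.+1%:R : R) < (Num.Def.archi_bound d^-1)%:R by exact: lt_trans h4 h5.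
    by rewrite ltr_nat => /ltnW.
  exists 0%N => n m _ hz; exfalso; move: dneg; rewrite -hz h_ev.
  have := @phi_ge0 n m t0; have := cc_gt0 n m; lra.
exists mu; split => // t e e0.
have : finite_set (T `\` [set g | `|ev y t - ev g t| < e]).
  have := (setcP T y).1 Tc => -[_ _ _ /(_ t) H].
  exact: ((@cvgrPdist_lt _ _ _ _ (cofin_filter T) _ _).1 H e e0).
set Fb := T `\` _ => fbad.
have fBI : finite_set [set n | exists m, (Nf n <= m)%N /\ Fb (h n m)].
  have : finite_set (\bigcup_(z in Fb) [set n | exists m, (Nf n <= m)%N /\ h n m = z]).
    apply: bigcup_finite => // z _; have [B HB] := hb z.
    by apply: (@bound_fin _ B) => n [m [Nm hz]]; exact: HB n m Nm hz.
  by apply: sub_finite_set => n [m [Nm Fz]]; exists (h n m) => //; exists m.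
move/fin_bound: fBI => [k0 Hk0]; exists k0 => k i k0k ik.
rewrite ltNge; apply/negP => ebad.
have : (nk k < k0)%N.
  apply: Hk0; exists (mu k); split; first exact: (HM _ (nkK k)).1.
  split; first exact: (HM _ (nkK k)).2.
  rewrite /= h_ev => H.
  have H1 := @phi_ge (nk k) (mu k) t i (leq_trans ik (nkge k)).
  have H2 := cc_gt0 (nk k) (mu k).
  have H3 := @phi_ge0 (nk k) (mu k) t.
  move: H; rewrite opprD addrA subrr sub0r normrN ger0_norm; last first.
    by apply: addr_ge0 => //; exact: ltW.
  rewrite /dd in H1; lra.
rewrite ltnNge; apply/negP/negPn; exact: leq_trans k0k (nkge k).
Qed.
End Strong.

Lemma inc_lt (mu : nat -> nat) : (forall k, (mu k < mu k.+1)%N) ->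
  forall k l, (k < l)%N -> (mu k < mu l)%N.
Proof.
move=> muS k l; elim: l => // l IH; rewrite ltnS leq_eqVlt => /orP [/eqP ->|/IH h].
  exact: muS.
exact: ltn_trans h (muS l).
Qed.

Lemma inc_ge (mu : nat -> nat) : (forall k, (mu k < mu k.+1)%N) ->
  forall k, (k <= mu k)%N.
Proof. by move=> muS; elim=> // k IH; exact: leq_ltn_trans IH (muS k). Qed.

Lemma inc_ltE (mu : nat -> nat) : (forall k, (mu k < mu k.+1)%N) ->
  forall k l, (mu k < mu l)%N -> (k < l)%N.
Proof.
move=> muS k l; rewrite ltnNge => /negP H; rewrite ltnNge; apply/negP => lk.
apply: H; rewrite leq_eqVlt in lk; case/orP: lk => [/eqP ->|/(inc_lt muS) /ltnW //].
by [].
Qed.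

Lemma inc_img_inf (mu : nat -> nat) (J : set nat) : (forall k, (mu k < mu k.+1)%N) ->
  infinite_set J -> infinite_set (mu @` J).
Proof.
move=> muS iJ /fin_bound [b Hb]; apply: iJ; apply: (@bound_fin _ b) => k Jk.
apply: leq_ltn_trans (inc_ge muS k) _; apply: Hb; by exists k.
Qed.

Lemma inf_gt (n : nat) : infinite_set [set m | (n < m)%N].
Proof.
move=> /fin_bound [b Hb]; have := Hb (n.+1 + b)%N; rewrite /= ltnS leq_addr => /(_ isT).
by rewrite ltnNge leq_addl.
Qed.

Lemma inf_ge (n : nat) : infinite_set [set m | (n <= m)%N].
Proof. by move=> fin; apply: (@inf_gt n); apply: sub_finite_set fin => m /ltnW. Qed.

Lemma ev_list (s : seq X) (Q : X -> nat -> Prop) :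
  (forall t, exists k0, forall k, (k0 <= k)%N -> Q t k) ->
  exists k0, forall k, (k0 <= k)%N -> forall t, t \in s -> Q t k.
Proof.
move=> H; elim: s => [|t s [k1 H1]]; first by exists 0%N => k _ t; rewrite in_nil.
have [k2 H2] := H t; exists (maxn k1 k2) => k; rewrite geq_max => /andP [k1k k2k] u.
by rewrite in_cons => /orP [/eqP ->|us]; [exact: H2|exact: H1].
Qed.

Lemma Zs_conv (y : Y) (x : nat -> nat -> Y) (mu : nat -> nat) :
  (forall n, lim_seq (x n) y) -> (forall k, (mu k < mu k.+1)%N) ->
  (forall t e, 0 < e -> exists k0, forall k i, (k0 <= k)%N -> (i <= k)%N ->
    `|ev (x i (mu k)) t - ev y t| < e) ->
  set_converges [set z | exists n i, (i <= n)%N /\ z = x i (mu n)] y.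
Proof.
move=> xl muS H; apply/setcP; split.
- by apply: (@countable_sub _ (fun n i => x i (mu n))) => z [n [i [_ ->]]]; exists n, i.
- apply: (@sub_infinite_set _ (x 0%N @` (mu @` setT))).
    by move=> z [_ [k _ <-] <-]; exists k, 0%N.
  apply: lim_img_inf (xl 0%N) _; apply: inc_img_inf muS _; exact: infinite_nat.
- by case=> n [i [_ E]]; apply: ((xl i).1 (mu n)); rewrite -E.
- move=> t; apply/(@cvgrPdist_lt _ _ _ _ (cofin_filter _)) => e e0.
  have [k0 Hk0] := H t e e0.
  apply: (sub_finite_set _ (finite_image (fun p => x p.2 (mu p.1))
     (finite_setX (finite_II k0) (finite_II k0)))).
  move=> z [[n [i [i_n ->]]] nz]; exists (n, i) => //; rewrite /=.
  have nk0 : (n < k0)%N.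
    rewrite ltnNge; apply/negP => k0n; apply: nz; rewrite distrC; exact: Hk0.
  split => //; exact: leq_ltn_trans i_n nk0.
Qed.

Lemma a4_a2m : alpha4 Y -> alpha2m Y.
Proof.
move=> a4 y x xl; have [mu [muS H]] := strong_mu xl a4.
by exists mu; split => //; exact: Zs_conv.
Qed.

Lemma a_seq (mu : nat -> nat) : (forall k, (mu k < mu k.+1)%N) ->
  exists a : nat -> nat, [/\ (forall j, (a j < a j.+1)%N), a 0%N = 0%N &
    forall n m, (a @` setT) n -> (a @` setT) m -> (n < m)%N ->
      exists k, (n < k)%N /\ m = mu k].
Proof.
move=> muS; pose a := fix a j := if j is j'.+1 then mu (a j').+1 else 0%N.
have aS j : (a j < a j.+1)%N by exact: inc_ge muS _.
exists a; split => // _ _ [j1 _ <-] [j2 _ <-] lt12.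
have := inc_ltE aS lt12; case: j2 lt12 => // j lt12 j1j.
exists (a j).+1; split => //; rewrite ltnS.
rewrite ltnS leq_eqVlt in j1j; case/orP: j1j => [/eqP -> //|/(inc_lt aS) /ltnW //].
Qed.

Lemma a2m_LR : alpha2m Y -> locally_Ramsey Y.
Proof.
move=> a2 y x xl; have [mu [muS Zc]] := a2 y x xl.
have [a [aS a0 Ha]] := a_seq muS.
exists (a @` setT); split; first by apply: inc_img_inf aS _; exact: infinite_nat.
apply: conv_sub Zc _ _.
  move=> z [n [m [In Im nm ->]]]; have [k [nk ->]] := Ha n m In Im nm.
  by exists k, n; split => //; exact: ltnW.
apply: (@sub_infinite_set _ (x 0%N @` (a @` [set j | (0 < j)%N]))).
  move=> z [_ [j j0 <-] <-]; exists 0%N, (a j); split => //.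
  - by exists 0%N.
  - by rewrite -a0; exact: inc_lt aS _ _ j0.
apply: lim_img_inf (xl 0%N) _; apply: inc_img_inf aS _; exact: inf_gt.
Qed.

Lemma enum_all (y : Y) (S : nat -> set Y) : (forall n, set_converges (S n) y) ->
  exists u : nat -> nat -> Y, forall n,
    [/\ injective (u n), forall m, S n (u n m) & lim_seq (u n) y].
Proof.
move=> Sc; have [u Hu] := choice (fun n => enum_conv (Sc n)).
by exists u => n; have [? [? ?]] := Hu n; split.
Qed.

Lemma a4_a2 : alpha4 Y -> alpha2 Y.
Proof.
move=> a4 y S [_ Sc]; have [u Hu] := enum_all Sc.
have ul n : lim_seq (u n) y by case: (Hu n).
have [mu [muS H]] := strong_mu ul a4.
exists [set z | exists n i, (i <= n)%N /\ z = u i (mu n)]; split.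
  by move=> z [n [i [_ ->]]]; exists i => //; case: (Hu i).
split; first exact: Zs_conv.
move=> n; apply: (@sub_infinite_set _ (u n @` (mu @` [set k | (n <= k)%N]))).
  move=> z [_ [k nk <-] <-]; split; first by case: (Hu n).
  by exists k, n.
apply: lim_img_inf (ul n) _; apply: inc_img_inf muS _; exact: inf_ge.
Qed.

Lemma a3m_a4 : alpha3m Y -> alpha4 Y.
Proof.
move=> a3 y S [_ Sc]; have [u Hu] := enum_all Sc.
have ul n : lim_seq (u n) y by case: (Hu n).
have [I [J [iI [iJ Zc]]]] := a3 y u ul.
exists [set z | exists n m, [/\ I n, J m, (n < m)%N & z = u n m]]; split.
  by move=> z [n [m [_ _ _ ->]]]; exists n => //; case: (Hu n).
split; first exact: Zc.
apply: sub_infinite_set iI => n In.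
have [m [nm Jm]] := inf_unbounded iJ n.
exists (u n m); split; first by case: (Hu n).
by exists n, m.
Qed.

Lemma LR_a3m : locally_Ramsey Y -> alpha3m Y.
Proof. by move=> LR y x xl; have [I [iI Zc]] := LR y x xl; exists I, I. Qed.

Lemma a2_a3 : alpha2 Y -> alpha3 Y.
Proof.
move=> a2 y S hS; have [T [TS [Tc H]]] := a2 y S hS; exists T; split => //; split => //.
by apply: (@sub_infinite_set _ setT) (infinite_nat) => n _; exact: H.
Qed.

Lemma a3_a4 : alpha3 Y -> alpha4 Y.
Proof.
move=> a3 y S hS; have [T [TS [Tc H]]] := a3 y S hS; exists T; split => //; split => //.
by apply: sub_infinite_set H => n /infinite_setN0.
Qed.

Lemma a4_Ramsey : alpha4 Y -> Ramsey Y.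
Proof.
move=> a4 y xn x xl xnl.
have gc n m : continuous (fun t => ev y t + (ev (x n m) t - ev (xn n) t)).
  move=> t; have := cvgD (@evC y t) (cvgB (@evC (x n m) t) (@evC (xn n) t)); exact.
pose g n m := mkY (@gc n m).
have gE n m t : ev (g n m) t = ev y t + (ev (x n m) t - ev (xn n) t) by [].
have gl n : lim_seq (g n) y.
  apply/limYP; split.
    move=> m gy; apply: ((xl n).1 m); apply: ev_inj => t.
    have := gE n m t; rewrite gy => E; lra.
  move=> t; have := (limYP _ _).1 (xl n) => -[_ /(_ t) H].
  have H2 := @cvgB _ _ _ _ eventually_filter _ _ _ _ H
    (@cvg_cst _ (ev (xn n) t) _ \oo eventually_filter).
  have := @cvgD _ _ _ _ eventually_filter _ _ _ _
    (@cvg_cst _ (ev y t) _ \oo eventually_filter) H2.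
  by rewrite subrr addr0; exact.
have [mu [muS H]] := strong_mu gl a4.
have [a [aS a0 Ha]] := a_seq muS.
exists (a @` setT); split; first by apply: inc_img_inf aS _; exact: infinite_nat.
move=> U /nbhsP [s [e [e0 sU]]].
have e2 : 0 < e / 2 by rewrite divr_gt0.
have [k0 Hk0] := @ev_list s
  (fun t k => forall i, (i <= k)%N -> `|ev (g i (mu k)) t - ev y t| < e / 2)
  (fun t => let: ex_intro k0 Hk := H t _ e2 in
     ex_intro _ k0 (fun k kk i ik => Hk k i kk ik)).
have [k1 Hk1] : exists k1, forall n, (k1 <= n)%N -> forall t, t \in s ->
    `|ev y t - ev (xn n) t| < e / 2.
  apply: ev_list => t; have := (limYP _ _).1 xnl => -[_ /(_ t) Ht].
  apply/ooP; exact: ((@cvgrPdist_lt _ _ _ _ eventually_filter _ _).1 Ht _ e2).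
exists (maxn k0 k1) => z [n [m [In Im /andP [Kn nm] ->]]].
apply: sU => t ts.
have [k [nk mk]] := Ha n m In Im nm.
rewrite gtn_max in Kn; case/andP: Kn => k0n k1n.
have h1 := Hk0 k (ltnW (ltn_trans k0n nk)) t ts n (ltnW nk).
have h2 := Hk1 n (ltnW k1n) t ts.
rewrite gE -mk addrAC subrr add0r in h1.
have h3 := ler_normD (ev (x n m) t - ev (xn n) t) (ev (xn n) t - ev y t).
rewrite distrC in h2.
have -> : ev (x n m) t - ev y t =
  (ev (x n m) t - ev (xn n) t) + (ev (xn n) t - ev y t) by rewrite addrA subrK.
lra.
Qed.

Lemma Ramsey_LR : Ramsey Y -> locally_Ramsey Y.
Proof.
move=> Ra y x xl.
have [t0 _] := neq_ev ((xl 0%N).1 0%N).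
have xnc n : continuous (fun t => ev y t + harmonic n).
  move=> t; have := cvgD (@evC y t) (@cvg_cst _ (harmonic n : R) _ (nbhs t) _); exact.
have x'c n m : continuous (fun t => ev (x n m) t + harmonic n).
  move=> t; have := cvgD (@evC (x n m) t) (@cvg_cst _ (harmonic n : R) _ (nbhs t) _); exact.
pose xn n := mkY (@xnc n); pose x' n m := mkY (@x'c n m).
have xnE n t : ev (xn n) t = ev y t + harmonic n by [].
have x'E n m t : ev (x' n m) t = ev (x n m) t + harmonic n by [].
have xnl : lim_seq xn y.
  apply/limYP; split.
    move=> n E; have := xnE n t0; rewrite E => E'.
    have := @harmonic_gt0 R n; lra.
  move=> t; have := @cvgD _ _ _ _ eventually_filter _ _ _ _
    (@cvg_cst _ (ev y t) _ \oo eventually_filter) (@cvg_harmonic R).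
  by rewrite addr0; exact.
have x'l n : lim_seq (x' n) (xn n).
  apply/limYP; split.
    move=> m E; apply: ((xl n).1 m); apply: ev_inj => t.
    have := x'E n m t; rewrite E xnE => E'; lra.
  move=> t; have := (limYP _ _).1 (xl n) => -[_ /(_ t) H].
  have := @cvgD _ _ _ _ eventually_filter _ _ _ _ H
    (@cvg_cst _ (harmonic n : R) _ \oo eventually_filter).
  exact.
have [I [iI HI]] := Ra y xn x' x'l xnl.
exists I; split => //.
apply/setcP; split.
- by apply: (@countable_sub _ x) => z [n [m [_ _ _ ->]]]; exists n, m.
- have [n0 In0] := infinite_setN0 iI.
  apply: (@sub_infinite_set _ (x n0 @` [set m | I m /\ (n0 < m)%N])).
    by move=> z [m [Im nm] <-]; exists n0, m.
  apply: lim_img_inf (xl n0) _ => /fin_bound [b Hb]; apply: iI.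
  apply: (@bound_fin _ (maxn b n0.+1)) => m Im.
  case: (ltnP n0 m) => nm; first by rewrite leq_max (Hb m (conj Im nm)).
  by rewrite leq_max ltnS nm orbT.
- by case=> n [m [_ _ _ E]]; apply: ((xl n).1 m); rewrite -E.
move=> t; apply/(@cvgrPdist_lt _ _ _ _ (cofin_filter _)) => e e0.
have e2 : 0 < e / 2 by rewrite divr_gt0.
have [k Hk] := HI _ (nbhs_box y [:: t] e2).
have [k1 Hk1] : exists k1, forall n, (k1 <= n)%N -> (harmonic n : R) < e / 2.
  have := (@cvgrPdist_lt _ _ _ _ eventually_filter _ _).1 (@cvg_harmonic R) _ e2.
  move/ooP => [k1 Hk1]; exists k1 => n /Hk1; rewrite sub0r normrN ger0_norm //.
  exact: harmonic_ge0.
pose K := maxn k k1.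
have xb n : exists b, forall m, (b <= m)%N -> `|ev y t - ev (x n m) t| < e.
  have := (limYP _ _).1 (xl n) => -[_ /(_ t) H].
  apply/ooP; exact: ((@cvgrPdist_lt _ _ _ _ eventually_filter _ _).1 H _ e0).
have [b Hb] := choice xb.
have : finite_set (\bigcup_(n in [set n | (n < K.+1)%N]) (x n @` [set m | (m < b n)%N])).
  apply: bigcup_finite; first exact: finite_II.
  move=> n _; exact: finite_image (finite_II _).
apply: sub_finite_set => z [[n [m [In Im nm ->]]] nz].
have nK : (n < K.+1)%N.
  rewrite ltnS leqNgt; apply/negP => Kn; apply: nz.
  rewrite gtn_max in Kn; case/andP: Kn => kn k1n.
  have h1 : `|ev (x' n m) t - ev y t| < e / 2.
    apply: (Hk (x' n m)); last exact: mem_head.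
    by exists n, m; split => //; rewrite kn.
  have h2 := Hk1 n (ltnW k1n).
  have h0 := @harmonic_ge0 R n.
  rewrite x'E in h1.
  have h3 := ler_normD (ev (x n m) t + harmonic n - ev y t) (- harmonic n).
  rewrite normrN (ger0_norm h0) in h3.
  rewrite distrC.
  have -> : ev (x n m) t - ev y t =
    (ev (x n m) t + harmonic n - ev y t) + (- harmonic n) by rewrite addrAC addrK.
  lra.
exists n => //; exists m => //.
rewrite /= ltnNge; apply/negP => bm; apply: nz; exact: Hb.
Qed.
End Cp.

Theorem corollary2p8 (R : realType) (X : topologicalType) :
  let Y := Cp X R in
  (alpha2m Y <-> alpha2 Y) /\
  (alpha2 Y <-> alpha3m Y) /\
  (alpha3m Y <-> alpha3 Y) /\
  (alpha3 Y <-> alpha4 Y) /\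
  (alpha4 Y <-> locally_Ramsey Y) /\
  (locally_Ramsey Y <-> Ramsey Y).
Proof.
move=> Y.
have A2m4 : alpha2m Y -> alpha4 Y.
  by move=> h; apply/a3m_a4/LR_a3m/a2m_LR.
have LR4 : locally_Ramsey Y -> alpha4 Y by move=> h; apply/a3m_a4/LR_a3m.
have A24 : alpha2 Y -> alpha4 Y by move=> h; apply/a3_a4/a2_a3.
split; first by split => [h|h]; [apply/a4_a2/A2m4|apply/a4_a2m/A24].
split; first by split => [h|h]; [apply/LR_a3m/a2m_LR/a4_a2m/A24|apply/a4_a2/a3m_a4].
split; first by split => [h|h]; [apply/a2_a3/a4_a2/a3m_a4|apply/LR_a3m/a2m_LR/a4_a2m/a3_a4].
split; first by split => [h|h]; [apply/a3_a4|apply/a2_a3/a4_a2].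
split; first by split => [h|h]; [apply/a2m_LR/a4_a2m|apply/LR4].
by split => [h|h]; [apply/a4_Ramsey/LR4|apply/Ramsey_LR].
Qed.
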